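(* There exist two $k$-CNF formulae $\phi$ and $\psi$ (for some $k$) such that $\phi$ is satisfiable and $\psi$ is unsatisfiable, but $\phi\sim\psi$, i.e. they cannot be distinguished by the 1-WL test.
   Context: A $k$-CNF formula $\phi=\{C_1,\ldots,C_m\}$ over letters $p_1,\ldots,p_n$ is encoded as a labelled bipartite graph $G_\phi$: constraint nodes $v_1,\ldots,v_m$ (one per clause) labelled $b_i=1-$(number of negative literals in $C_i$); variable nodes $w_1,\ldots,w_n$ (one per letter) all with the same (empty) label; an edge $v_iw_j$ labelled $E_{ij}=1$ if $p_j\in C_i$, $-1$ if $\neg p_j\in C_i$, and no edge if $p_j$ does not occur in $C_i$. The 1-WL colouring of $G_\phi$: initial colours $C^V_0(v)=\mathtt{Colour}^V_0(\text{label}(v))$, $C^W_0(w)=\mathtt{Colour}^W_0(\text{label}(w))$; for $i=1,\ldots,|V\cup W|$, $C^V_i(v)=\mathtt{Colour}^V_i(C^V_{i-1}(v),\{\!\{(C^W_{i-1}(w),E_{vw}) : w\in N(v)\}\!\})$ and $C^W_i(w)=\mathtt{Colour}^W_i(C^W_{i-1}(w),\{\!\{(C^V_{i-1}(v),E_{vw}) : v\in N(w)\}\!\})$, where the $\mathtt{Colour}$ maps are injective into natural numbers not previously used; the output is the final pair of colourings. $\phi\sim\psi$ means that running this procedure on $G_\phi$ and $G_\psi$ gives the same outputs (same colour multisets) for all choices of the injective colouring functions. *)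

(* Defs.v *)
From mathcomp Require Import all_boot all_order all_algebra.
Set Implicit Arguments. Unset Strict Implicit. Unset Printing Implicit Defensive.
Import GRing.Theory Num.Theory.

(* A CNF formula with m clauses over n letters p_0..p_{n-1}:
   phi i j = None      : p_j does not occur in clause C_i
   phi i j = Some true : p_j  occurs in C_i (positive literal)
   phi i j = Some false: ~p_j occurs in C_i (negative literal)        *)
Definition cnf (m n : nat) := 'I_m -> 'I_n -> option bool.

Definition is_kcnf (k m n : nat) (phi : cnf m n) : Prop :=
  forall i : 'I_m, #|[pred j : 'I_n | phi i j != None]| <= k.

Definition satisfies (m n : nat) (phi : cnf m n) (a : 'I_n -> bool) : Prop :=
  forall i : 'I_m, exists j : 'I_n, phi i j = Some (a j).

Definition satisfiable (m n : nat) (phi : cnf m n) : Prop :=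
  exists a : 'I_n -> bool, satisfies phi a.

Definition edge_label (b : bool) : int := if b then 1%R else (-1)%R.

Definition constraint_label (m n : nat) (phi : cnf m n) (i : 'I_m) : int :=
  (1 - (#|[pred j : 'I_n | phi i j == Some false]| : int))%R.

(* Round 0 uses c0V (on constraint
   labels) and c0W (on the unique empty variable label); round i >= 1 uses
   cV i and cW i, taking the previous colour and the multiset of
   (neighbour colour, edge label) pairs, the multiset being represented by a
   sequence considered up to permutation. *)
Record wl_colours := WLColours {
  c0V : int -> nat;
  c0W : unit -> nat;
  cV : nat -> nat -> seq (nat * int) -> nat;
  cW : nat -> nat -> seq (nat * int) -> nat }.

Definition in_round (C : wl_colours) (r x : nat) : Prop :=
  match r with
  | 0 => (exists l, c0V C l = x) \/ (exists u, c0W C u = x)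
  | _ => (exists c s, cV C r c s = x) \/ (exists c s, cW C r c s = x)
  end.

Definition mset_injective (f : nat -> seq (nat * int) -> nat) : Prop :=
  forall c c' s s', f c s = f c' s' <-> (c = c' /\ perm_eq s s').

Definition valid_colours (C : wl_colours) : Prop :=
  [/\ injective (c0V C), injective (c0W C),
      (forall r, 0 < r -> mset_injective (cV C r) /\ mset_injective (cW C r))
    & (forall r r' x, r' < r -> in_round C r x -> ~ in_round C r' x)].

Section WL.
Variables (m n : nat) (phi : cnf m n) (C : wl_colours).

Definition nbV (CW : 'I_n -> nat) (v : 'I_m) : seq (nat * int) :=
  pmap (fun w => omap (fun b => (CW w, edge_label b)) (phi v w)) (enum 'I_n).

Definition nbW (CV : 'I_m -> nat) (w : 'I_n) : seq (nat * int) :=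
  pmap (fun v => omap (fun b => (CV v, edge_label b)) (phi v w)) (enum 'I_m).

Fixpoint wl (r : nat) : ('I_m -> nat) * ('I_n -> nat) :=
  match r with
  | 0 => (fun v => c0V C (constraint_label phi v), fun _ => c0W C tt)
  | r'.+1 =>
      let CVW := wl r' in
      (fun v => cV C r (CVW.1 v) (nbV CVW.2 v),
       fun w => cW C r (CVW.2 w) (nbW CVW.1 w))
  end.

(* output: final colourings after |V u W| = m + n rounds *)
Definition wl_output := wl (m + n).

End WL.

Definition wl_equiv (m n m' n' : nat) (phi : cnf m n) (psi : cnf m' n') : Prop :=
  forall C : wl_colours, valid_colours C ->
    perm_eq [seq (wl_output phi C).1 v | v <- enum 'I_m]
            [seq (wl_output psi C).1 v | v <- enum 'I_m'] /\
    perm_eq [seq (wl_output phi C).2 w | w <- enum 'I_n]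
            [seq (wl_output psi C).2 w | w <- enum 'I_n'].

(* Main.v *)
Require Import Defs.
From mathcomp Require Import all_boot all_order all_algebra.

Definition Pg (g : nat -> nat) (i j : nat) : option bool :=
  let e := i %% 6 in if (j == e) || (j == g e) then Some (i < 6) else None.
Definition gphi (e : nat) := e.+1 %% 6.
Definition gpsi (e : nat) := if e < 3 then e.+1 %% 3 else 3 + (e.+1 %% 3).
Definition FE g : cnf 12 6 := fun i j => Pg g i j.

Definition goodg g :=
  [&& all (fun v => pmap (Pg g v) (iota 0 6) == [:: v < 6; v < 6]) (iota 0 12),
      all (fun w => pmap (fun v => omap (fun b => (v < 6, b)) (Pg g v w)) (iota 0 12)
                   == [:: (true,true);(true,true);(false,false);(false,false)]) (iota 0 6),
      all (fun v => count (fun j => Pg g v j == Some false) (iota 0 6) == if v < 6 then 0 else 2) (iota 0 12) &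
      all (fun v => count (fun j => Pg g v j != None) (iota 0 6) <= 2) (iota 0 12)].

Lemma goodphi : goodg gphi. Proof. by vm_compute. Qed.
Lemma goodpsi : goodg gpsi. Proof. by vm_compute. Qed.
Lemma satphi : all (fun i => has (fun j => Pg gphi i j == Some (odd j)) (iota 0 6)) (iota 0 12).
Proof. by vm_compute. Qed.

Lemma pmap_map (A B C : Type) (f : B -> option C) (h : A -> B) s :
  pmap f (map h s) = pmap (fun x => f (h x)) s.
Proof. by elim: s => //= x s ->. Qed.

Lemma pmap_omap (A B C : Type) (f : A -> option B) (h : B -> C) s :
  pmap (fun x => omap h (f x)) s = map h (pmap f s).
Proof. by elim: s => //= x s ->; case: (f x). Qed.

Lemma enum_val_pmap n (B : Type) (f : nat -> option B) :
  pmap (fun j : 'I_n => f j) (enum 'I_n) = pmap f (iota 0 n).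
Proof. by rewrite -val_enum_ord pmap_map. Qed.

Lemma enum_val_count n (f : nat -> bool) :
  count (fun j : 'I_n => f j) (enum 'I_n) = count f (iota 0 n).
Proof. by rewrite -val_enum_ord count_map. Qed.

Fixpoint col (C : wl_colours) (r : nat) : nat * nat * nat :=
  match r with
  | 0 => (c0V C 1%R, c0V C (-1)%R, c0W C tt)
  | r'.+1 => let: (a, b, c) := col C r' in
      (cV C r'.+1 a [:: (c, edge_label true); (c, edge_label true)],
       cV C r'.+1 b [:: (c, edge_label false); (c, edge_label false)],
       cW C r'.+1 c [:: (a, edge_label true); (a, edge_label true);
                        (b, edge_label false); (b, edge_label false)])
  end.

Lemma wl_col g C : goodg g -> forall r,
  (forall v : 'I_12, (wl (FE g) C r).1 v = if v < 6 then (col C r).1.1 else (col C r).1.2) /\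
  (forall w : 'I_6, (wl (FE g) C r).2 w = (col C r).2).
Proof.
case/and4P => /allP HA /allP HB /allP HC _.
elim => [|r [IH1 IH2]].
  split => // v /=.
  rewrite /constraint_label cardE /enum_mem -enumT size_filter.
  have := HC v; rewrite mem_iota add0n => /(_ (ltn_ord v)) /eqP.
  rewrite -enum_val_count /FE => H.
  rewrite -[count _ _]/(count (fun j : 'I_6 => Pg g v j == Some false) (enum 'I_6)) H.
  by case: (v < 6).
move: IH1 IH2; rewrite /=; case: (col C r) => [[a b] c] /= IH1 IH2.
split => [v|w].
  rewrite IH1 /nbV.
  under eq_pmap => w do rewrite IH2.
  rewrite (@pmap_omap _ _ _ (fun w => FE g v w)) enum_val_pmap.
  have := HA v; rewrite mem_iota add0n => /(_ (ltn_ord v)) /eqP ->.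
  by case: (v < 6).
rewrite IH2 /nbW.
under eq_pmap => v do rewrite IH1.
rewrite (eq_pmap (f2 := fun v : 'I_12 => omap (fun p : bool * bool => (if p.1 then a else b, edge_label p.2))
   (omap (fun bb => (nat_of_ord v < 6, bb)) (Pg g v w)))); last first.
  by move=> v; rewrite /FE; case: (Pg g v w).
rewrite (@pmap_omap _ _ _ (fun v : 'I_12 => omap (fun bb => (nat_of_ord v < 6, bb)) (Pg g v w))).
rewrite (@enum_val_pmap 12 _ (fun v => omap (fun bb => (v < 6, bb)) (Pg g v w))).
by have := HB w; rewrite mem_iota add0n => /(_ (ltn_ord w)) /eqP ->.
Qed.

Lemma kcnf_g g : goodg g -> is_kcnf 2 (FE g).
Proof.
case/and4P => _ _ _ /allP HD i.
rewrite cardE /enum_mem -enumT size_filter.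
have := HD i; rewrite mem_iota add0n => /(_ (ltn_ord i)).
by rewrite -enum_val_count.
Qed.

Lemma sat_phi : satisfiable (FE gphi).
Proof.
exists (fun j => odd j) => i.
have /allP := satphi => /(_ i); rewrite mem_iota add0n => /(_ (ltn_ord i)) /hasP [j].
rewrite mem_iota add0n => Hj /eqP E.
by exists (Ordinal Hj).
Qed.

Lemma satE (a : 'I_6 -> bool) (i e f : nat) (b : bool) :
  satisfies (FE gpsi) a -> i < 12 -> e = i %% 6 -> f = gpsi e -> b = (i < 6) ->
  (a (inord e) == b) || (a (inord f) == b).
Proof.
move=> H Hi He Hf Hb.
have [j] := H (Ordinal Hi).
rewrite /FE /Pg /= -He -Hf -Hb.
have he : e < 6 by rewrite He ltn_pmod.
have hf : f < 6 by rewrite Hf /gpsi; case: ifP => _; [apply: (leq_trans (ltn_pmod _ _)) | rewrite -[6]/(3 + 3) ltn_add2l ltn_pmod].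
case: ifP => // /orP [] /eqP Ej [] ->.
  by rewrite (_ : j = inord e) ?eqxx //; apply/val_inj; rewrite /= inordK.
by rewrite (_ : j = inord f) ?eqxx ?orbT //; apply/val_inj; rewrite /= inordK.
Qed.

Lemma unsat_psi : ~ satisfiable (FE gpsi).
Proof.
case=> a H.
have h0 := @satE a 0 0 1 true H isT erefl erefl erefl.
have h1 := @satE a 1 1 2 true H isT erefl erefl erefl.
have h2 := @satE a 2 2 0 true H isT erefl erefl erefl.
have h6 := @satE a 6 0 1 false H isT erefl erefl erefl.
have h7 := @satE a 7 1 2 false H isT erefl erefl erefl.
have h8 := @satE a 8 2 0 false H isT erefl erefl erefl.
move: h0 h1 h2 h6 h7 h8.
by case: (a (inord 0)); case: (a (inord 1)); case: (a (inord 2)).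
Qed.


Lemma eq_out C r :
  [seq (wl (FE gphi) C r).1 v | v <- enum 'I_12] = [seq (wl (FE gpsi) C r).1 v | v <- enum 'I_12] /\
  [seq (wl (FE gphi) C r).2 v | v <- enum 'I_6] = [seq (wl (FE gpsi) C r).2 v | v <- enum 'I_6].
Proof.
have [A1 A2] := @wl_col gphi C goodphi r.
have [B1 B2] := @wl_col gpsi C goodpsi r.
split. Time apply: eq_map => x. Time rewrite A1 B1 //. Time apply: eq_map => x. Time by rewrite A2 B2.
Qed.


Theorem proposition6 :
  exists (k m n m' n' : nat) (phi : cnf m n) (psi : cnf m' n'),
    [/\ is_kcnf k phi, is_kcnf k psi, satisfiable phi, ~ satisfiable psi
      & wl_equiv phi psi].
Proof.
exists 2, 12, 6, 12, 6, (FE gphi), (FE gpsi).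
split.
exact: kcnf_g goodphi.
exact: kcnf_g goodpsi.
exact: sat_phi.
exact: unsat_psi.
move=> C _.
have [E1 E2] := eq_out C (12 + 6).
split; [exact: (ecast s (perm_eq _ s) E1 (perm_refl _)) | exact: (ecast s (perm_eq _ s) E2 (perm_refl _))].
Qed.
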